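(* Let $a,b,c,x,y,t\in\mathbb{C}$ with $|yt|<1$. Let $d,e,xt\in\mathbb{C}\setminus\{q^{-m}:m\ge0\}$. Then $$\sum_{n=0}^\infty\phi_n^{(a,b,c;d,e)}(x,y|q)\frac{(-1)^nq^{\binom n2}t^n}{(q;q)_n}=(xt;q)_\infty\sum_{N=0}^\infty\frac{(-1)^Nq^{\binom N2}(a,b,c;q)_N}{(q,d,e,xt;q)_N}(yt)^N.$$
   Context: Throughout, $0<q<1$. $(\alpha;q)_0=1$, $(\alpha;q)_n=\prod_{j=0}^{n-1}(1-\alpha q^j)$, $(\alpha;q)_\infty=\prod_{j\ge0}(1-\alpha q^j)$, and $(\alpha_1,\dots,\alpha_r;q)_n=\prod_i(\alpha_i;q)_n$. $\begin{bmatrix}n\\k\end{bmatrix}=\frac{(q;q)_n}{(q;q)_k(q;q)_{n-k}}$. $$\phi_n^{(a,b,c;d,e)}(x,y|q)=\sum_{k=0}^n\begin{bmatrix}n\\k\end{bmatrix}\frac{(a,b,c;q)_k}{(d,e;q)_k}x^{n-k}y^k.$$ *)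

(* Defs.v *)
From HB Require Import structures.
From mathcomp Require Import all_boot all_order all_algebra.
From mathcomp Require Import complex.
From mathcomp Require Import all_classical all_reals all_analysis.
Set Implicit Arguments. Unset Strict Implicit. Unset Printing Implicit Defensive.
Import Order.TTheory GRing.Theory Num.Theory ComplexField.
Import numFieldTopology.Exports numFieldNormedType.Exports.
Local Open Scope ring_scope.

(* The complex numbers over a real type R, seen as a numClosedFieldType so that
   MathComp-Analysis' topology / normed structure (limits, series) applies. *)
Definition Cx (R : realType) : numClosedFieldType := R[i].

Definition qpoch {R : realType} (q alpha : Cx R) (n : nat) : Cx R :=
  \prod_(j < n) (1 - alpha * q ^+ j).

Definition qbinom {R : realType} (q : Cx R) (n k : nat) : Cx R :=
  qpoch q q n / (qpoch q q k * qpoch q q (n - k)).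

Definition phi {R : realType} (q a b c d e x y : Cx R) (n : nat) : Cx R :=
  \sum_(k < n.+1) qbinom q n k *
     ((qpoch q a k * qpoch q b k * qpoch q c k) / (qpoch q d k * qpoch q e k))
     * x ^+ (n - k) * y ^+ k.

(* Main.v *)
Require Import Defs.
From HB Require Import structures.
From mathcomp Require Import all_boot all_order all_algebra.
From mathcomp Require Import complex.
From mathcomp Require Import all_classical all_reals all_analysis.
From mathcomp Require Import ring lra zify.
Import Order.TTheory GRing.Theory Num.Theory ComplexField.
Import numFieldTopology.Exports numFieldNormedType.Exports.
Local Open Scope ring_scope.
Local Open Scope classical_set_scope.
Local Open Scope complex_scope.

Set Implicit Arguments. Unset Strict Implicit.
Section Aux.
Variable R : realType.
Implicit Types z w : Cx R.

Definition nr z : R := Normc.normc z.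

Lemma nrE z : `|z| = (nr z)%:C.
Proof. by case: z. Qed.

Lemma nr_ge0 z : 0 <= nr z.
Proof. by case: z => a b; rewrite /nr /Normc.normc sqrtr_ge0. Qed.

Lemma nrM z w : nr (z * w) = nr z * nr w.
Proof. exact: Normc.normcM. Qed.

Lemma nrV z : nr (z^-1) = (nr z)^-1.
Proof. exact: Normc.normcV. Qed.

Lemma nrD z w : nr (z + w) <= nr z + nr w.
Proof. by rewrite -lecR -!nrE rmorphD /= -!nrE ler_normD. Qed.

Lemma nrN z : nr (- z) = nr z.
Proof. by apply: complexI; rewrite -!nrE normrN. Qed.

Lemma nrB z w : nr (z - w) <= nr z + nr w.
Proof. by rewrite -(nrN w) nrD. Qed.

Lemma nrR (x : R) : nr (x%:C) = `|x|.
Proof. by rewrite /nr /Normc.normc /= expr0n /= addr0 sqrtr_sqr. Qed.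

Lemma nrX z n : nr (z ^+ n) = nr z ^+ n.
Proof. by elim: n => [|n IH]; rewrite ?expr0 ?exprS ?nrM ?IH // -[1]/(1%:C) nrR normr1. Qed.

Lemma nr0 : nr 0 = 0.
Proof. by rewrite -[0]/(0%:C) nrR normr0. Qed.

Lemma nr1 : nr 1 = 1.
Proof. by rewrite -[1]/(1%:C) nrR normr1. Qed.

Lemma nr_eq0 z : (nr z == 0) = (z == 0).
Proof. by rewrite -(inj_eq (@complexI _)) -nrE normr_eq0. Qed.

Lemma nr_lt (z : Cx R) e : 0 < e -> nr z < complex.Re e -> `|z| < e.
Proof.
move=> e0 h; have er : e \is Num.real by rewrite realE ltW.
by rewrite nrE -(RRe_real er) ltcR.
Qed.

Lemma Re_gt0 (e : Cx R) : 0 < e -> 0 < complex.Re e.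
Proof. by case: e => a b; rewrite ltcE /= => /andP[]. Qed.

Lemma nrDiff z : nr z >= `|complex.Re z| /\ nr z >= `|complex.Im z|.
Proof.
case: z => a b; rewrite /nr /Normc.normc /=; split.
- rewrite -(sqrtr_sqr a) ler_sqrt ?lerDl ?sqr_ge0 // addr_ge0 ?sqr_ge0 //.
- rewrite -(sqrtr_sqr b) ler_sqrt ?lerDr ?sqr_ge0 // addr_ge0 ?sqr_ge0 //.
Qed.

Lemma nr_cplx (a b : R) : nr (a +i* b) <= `|a| + `|b|.
Proof.
have -> : a +i* b = a%:C + 'i * b%:C.
  by simpc.
apply: le_trans (nrD _ _) _; rewrite nrM !nrR.
have -> : nr 'i = 1 by rewrite /nr /Normc.normc /= expr0n expr1n add0r sqrtr1.
by rewrite mul1r.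
Qed.

End Aux.

Set Implicit Arguments. Unset Strict Implicit.
Section Ana.
Variable R : realType.

Lemma near_exN (P : nat -> Prop) :
  (\forall n \near \oo, P n) -> exists N, forall n, (N <= n)%N -> P n.
Proof. by move=> [N _ H]; exists N => n; exact: H. Qed.

Lemma ratio_summable (g : nat -> R) m0 :
  (forall n, 0 <= g n) -> (forall k, (m0 <= k)%N -> g k.+1 <= g k / 2) ->
  cvgn (series g).
Proof.
move=> g0 hr.
pose K := \sum_(j < m0.+1) g j * 2 ^+ j.
have term : forall j, (j <= m0)%N -> g j * 2 ^+ j <= K.
  move=> j hj; rewrite /K (bigD1 (Ordinal (hj : (j < m0.+1)%N))) //= lerDl.
  by apply: sumr_ge0 => i _; rewrite mulr_ge0 ?exprn_ge0.
have conv : forall j, g j = g j * 2 ^+ j * (2^-1) ^+ j.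
  by move=> j; rewrite -mulrA -exprMn mulfV ?pnatr_eq0 // expr1n mulr1.
have hb : forall k, g k <= K * (2^-1) ^+ k.
  elim => [|k IH].
    by rewrite {1}conv ler_pM2r ?exprn_gt0 ?invr_gt0 // term.
  case: (leqP m0 k) => hk.
    apply: le_trans (hr k hk) _; rewrite exprSr mulrA ler_pM2r ?invr_gt0 //.
  by rewrite {1}conv ler_pM2r ?exprn_gt0 ?invr_gt0 // term.
apply: (@series_le_cvg R g (geometric K (2^-1))) => //.
- by move=> n; rewrite /= mulr_ge0 ?exprn_ge0 ?invr_ge0 //;
    apply: le_trans (g0 0%N) (le_trans (hb 0%N) _); rewrite expr0 mulr1.
- apply: is_cvg_geometric_series.
  by rewrite ger0_norm ?invr_ge0 // invf_lt1 // ltr1n.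
Qed.

Lemma nr_sum (I : Type) (r : seq I) (P : pred I) (F : I -> Cx R) :
  nr (\sum_(i <- r | P i) F i) <= \sum_(i <- r | P i) nr (F i).
Proof.
apply: (big_rec2 (fun a b => nr a <= b)); first by rewrite nr0.
by move=> i y1 y2 _ h; apply: le_trans (nrD _ _) _; rewrite lerD2l.
Qed.

Lemma bridge (u : nat -> Cx R) (l : Cx R) :
  (fun n => nr (l - u n)) @ \oo --> (0:R) -> u @ \oo --> l.
Proof.
move=> h; apply/cvgrPdist_lt => e e0.
apply: filterS (cvgr0_norm_lt _ h _ (Re_gt0 e0)) => n.
by rewrite ger0_norm ?nr_ge0 // => /nr_lt; apply.
Qed.

Lemma bridgeC (u : nat -> Cx R) (l : Cx R) :
  u @ \oo --> l -> (fun n => nr (l - u n)) @ \oo --> (0:R).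
Proof.
move=> h; apply/cvgr0Pnorm_lt => e e0.
have e0' : 0 < e%:C :> Cx R by rewrite ltcR.
apply: filterS ((cvgrPdist_lt _ _).1 h _ e0') => n.
by rewrite nrE ltcR ger0_norm ?nr_ge0.
Qed.

Lemma abs_cvg (f : nat -> Cx R) (g : nat -> R) :
  (forall k, nr (f k) <= g k) -> cvgn (series g) -> cvgn (series f).
Proof.
move=> hfg hg.
have g0 : forall k, 0 <= g k by move=> k; apply: le_trans (nr_ge0 _) (hfg k).
have hre : cvgn (series (fun k => complex.Re (f k))).
  apply: normed_cvg; apply: (@series_le_cvg R _ g) => // k /=; first exact: normr_ge0.
  by apply: le_trans _ (hfg k); case: (nrDiff (f k)).
have him : cvgn (series (fun k => complex.Im (f k))).
  apply: normed_cvg; apply: (@series_le_cvg R _ g) => // k /=; first exact: normr_ge0.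
  by apply: le_trans _ (hfg k); case: (nrDiff (f k)).
have E : forall n, series f n = (series (fun k => complex.Re (f k)) n) +i*
                                (series (fun k => complex.Im (f k)) n).
  elim => [|n IH]; first by rewrite !seriesEord /= !big_ord0.
  by rewrite !seriesSr IH; case: (f n).
apply/cvg_ex; exists (limn (series (fun k => complex.Re (f k))) +i*
                      limn (series (fun k => complex.Im (f k)))).
apply: bridge.
have H0 : (fun n => `|limn (series (fun k => complex.Re (f k))) -
                      series (fun k => complex.Re (f k)) n| +
                    `|limn (series (fun k => complex.Im (f k))) -
                      series (fun k => complex.Im (f k)) n|) @ \oo --> (0:R).
  rewrite -[0]addr0; apply: cvgD.
    rewrite -(@normr0 _ R) -(subrr (limn (series (fun k => complex.Re (f k))))).
    by apply: cvg_norm; apply: cvgB => //; exact: cvg_cst.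
  rewrite -(@normr0 _ R) -(subrr (limn (series (fun k => complex.Im (f k))))).
  by apply: cvg_norm; apply: cvgB => //; exact: cvg_cst.
apply: (squeeze_cvgr _ (cvg_cst 0) H0).
near=> n; rewrite nr_ge0 /= E; exact: nr_cplx.
Unshelve. all: by end_near.
Qed.


Lemma tail_bound (f : nat -> Cx R) (g : nat -> R) L :
  cvgn (series f) -> cvgn (series g) ->
  (forall m, (L <= m)%N -> nr (f m) <= g m) ->
  nr (limn (series f) - series f L) <= limn (series g) - series g L.
Proof.
move=> hf hg hfg.
have H : (fun n => nr (limn (series f) - series f n) + (series g n - series g L))
   @ \oo --> (0 + (limn (series g) - series g L)).
  apply: cvgD; first exact: bridgeC.
  by apply: cvgB => //; exact: cvg_cst.
rewrite -[X in _ <= X]add0r -(cvg_lim _ H) //.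
apply: limr_ge; first by apply/cvg_ex; eexists; exact: H.
near=> n.
have hLn : (L <= n)%N by near: n; exact: nbhs_infty_ge.
have -> : limn (series f) - series f L =
   (limn (series f) - series f n) + (series f n - series f L) by rewrite addrA subrK.
apply: le_trans (nrD _ _) _; rewrite lerD2l.
rewrite !sub_series_geq //.
apply: le_trans (nr_sum _ _ _) _.
by apply: ler_sum_nat => k /andP[hk _]; exact: hfg.
Unshelve. all: by end_near.
Qed.

Lemma conv_null (a T : nat -> R) B :
  (forall k, 0 <= a k) -> cvgn (series a) -> (forall L, 0 <= T L <= B) ->
  T @ \oo --> (0:R) ->
  (fun M => \sum_(0 <= k < M) a k * T (M - k)%N) @ \oo --> (0:R).
Proof.
move=> a0 ha hT hT0.
set A := limn (series a).
have sA : forall n, series a n <= A.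
  apply: nondecreasing_cvgn_le => //.
  exact: (@nondecreasing_series R a xpredT 0 (fun n _ _ => a0 n)).
have A0 : 0 <= A by apply: le_trans (sA 0%N); rewrite seriesEnat /= big_geq.
have B0 : 0 <= B by case/andP: (hT 0%N) => h1 h2; apply: le_trans h1 h2.
apply/cvgrPdist_lt => e e0.
set e' := e / (A + B + 1).
have e'0 : 0 < e' by rewrite divr_gt0 // ltr_wpDl // addr_ge0.
have [K hK] := near_exN ((cvgrPdist_lt _ _).1 ha _ e'0).
have [L0 hL] := near_exN (cvgr0_norm_lt _ hT0 _ e'0).
exists (K + L0)%N => // M /= hM.
rewrite sub0r normrN ger0_norm; last first.
  by apply: sumr_ge0 => k _; rewrite mulr_ge0 //; case/andP: (hT (M-k)%N).
have hKM : (K <= M)%N by apply: leq_trans hM; exact: leq_addr.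
rewrite (@big_cat_nat _ _ _ K 0 M) //=.
have h1 : \sum_(0 <= k < K) a k * T (M - k)%N <= A * e'.
  apply: le_trans (_ : \sum_(0 <= k < K) a k * e' <= _).
    apply: ler_sum_nat => k /andP[_ hk]; apply: ler_wpM2l => //.
    have := hL (M - k)%N; rewrite ger0_norm; last by case/andP: (hT (M-k)%N).
    move=> h; apply/ltW/h.
    apply: leq_trans (_ : (M - K <= M - k)%N); last by apply: leq_sub2l; exact: ltnW.
    by rewrite leq_subRL // addnC.
  by rewrite -mulr_suml ler_wpM2r ?(ltW e'0) //; exact: (sA K).
have h2 : \sum_(K <= k < M) a k * T (M - k)%N <= e' * B.
  apply: le_trans (_ : \sum_(K <= k < M) a k * B <= _).
    apply: ler_sum_nat => k _; apply: ler_wpM2l => //.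
    by case/andP: (hT (M-k)%N).
  rewrite -mulr_suml ler_wpM2r // -sub_series_geq //.
  apply: le_trans (_ : A - series a K <= _); first by rewrite lerD2r.
  have := hK K (leqnn K); rewrite ger0_norm ?subr_ge0 //; exact: ltW.
apply: (le_lt_trans (lerD h1 h2)).
rewrite [e' * B]mulrC -mulrDl /e' mulrA ltr_pdivrMr; last by rewrite ltr_wpDl // addr_ge0.
nra.
Qed.

End Ana.
Set Implicit Arguments. Unset Strict Implicit.

Section Q.
Variable R : realType.
Variable q : R.
Hypothesis hq : 0 < q < 1.
Let qc : Cx R := q%:C.

Definition W (a b c d e w s : Cx R) (k : nat) : Cx R :=
  (-1) ^+ k * qc ^+ 'C(k, 2) * (qpoch qc a k * qpoch qc b k * qpoch qc c k)
      / (qpoch qc qc k * qpoch qc d k * qpoch qc e k * qpoch qc w k) * s ^+ k.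

Lemma qpochS z k : qpoch qc z k.+1 = qpoch qc z k * (1 - z * qc ^+ k).
Proof. by rewrite /qpoch big_ord_recr. Qed.

Lemma qpoch0 k : qpoch qc 0 k = 1.
Proof. by rewrite /qpoch big1 // => i _; rewrite mul0r subr0. Qed.

Lemma binS2 k : 'C(k.+1, 2) = ('C(k, 2) + k)%N.
Proof. by rewrite binS bin1. Qed.

Lemma WS a b c d e w s k : W a b c d e w s k.+1 = W a b c d e w s k *
  ((-1) * qc ^+ k * ((1 - a * qc ^+ k) * (1 - b * qc ^+ k) * (1 - c * qc ^+ k))
    / ((1 - qc * qc ^+ k) * (1 - d * qc ^+ k) * (1 - e * qc ^+ k) * (1 - w * qc ^+ k)) * s).
Proof.
rewrite /W !qpochS binS2 exprD !exprS !invfM.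
ring.
Qed.

Lemma nrq k : nr (qc ^+ k) = q ^+ k.
Proof. by rewrite nrX nrR ger0_norm //; case/andP: hq => h _; exact: ltW. Qed.

Lemma fac_bounds z k : nr z * q ^+ k <= 2^-1 ->
  2^-1 <= nr (1 - z * qc ^+ k) <= 2.
Proof.
move=> h; have := nrB 1 (z * qc ^+ k); have := nrD (1 - z * qc ^+ k) (z * qc ^+ k).
rewrite subrK nrM nrq nr1 => h1 h2; apply/andP; split; lra.
Qed.


Lemma W_ratio a b c d e w s : exists m0, forall k, (m0 <= k)%N ->
  nr (W a b c d e w s k.+1) <= nr (W a b c d e w s k) / 2.
Proof.
have q0 : 0 <= q by case/andP: hq => h _; exact: ltW.
have q1 : q <= 1 by case/andP: hq => _ h; exact: ltW.
set K := 1 + nr a + nr b + nr c + nr d + nr e + nr w + nr s.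
have hK : [/\ nr a <= K, nr b <= K, nr c <= K & nr d <= K] /\
          [/\ nr e <= K, nr w <= K, nr s <= K & q <= K].
  have := nr_ge0 a; have := nr_ge0 b; have := nr_ge0 c; have := nr_ge0 d.
  have := nr_ge0 e; have := nr_ge0 w; have := nr_ge0 s.
  rewrite /K; move=> *; split; split; lra.
have K1 : 1 <= K.
  have := nr_ge0 a; have := nr_ge0 b; have := nr_ge0 c; have := nr_ge0 d.
  have := nr_ge0 e; have := nr_ge0 w; have := nr_ge0 s.
  rewrite /K; move=> *; lra.
have K0 : 0 < K by lra.
set eps := (256 * K)^-1.
have eps0 : 0 < eps by rewrite invr_gt0 mulr_gt0.
have epsK : eps * K = 256^-1 by rewrite /eps invfM -mulrA mulVf ?mulr1 // gt_eqF.
have hq0 : `|q| < 1 by rewrite ger0_norm //; case/andP: hq.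
have [m0 hm0] := near_exN (cvgr0_norm_lt _ (cvg_expr hq0) _ eps0).
exists m0 => k hk.
have qk0 : 0 <= q ^+ k by rewrite exprn_ge0.
have qk : q ^+ k <= eps by have := hm0 k hk; rewrite /= ger0_norm // => /ltW.
have small : forall z, nr z <= K -> nr z * q ^+ k <= 2^-1.
  move=> z hz; apply: le_trans (_ : K * eps <= _).
    by apply: ler_pM => //; exact: nr_ge0.
  by rewrite mulrC epsK; lra.
case: hK => [[ha hb hc hd] [he hw hs hqK]].
have nq : nr qc = q by rewrite nrR ger0_norm.
have /andP[na1 na2] := fac_bounds (small _ ha).
have /andP[nb1 nb2] := fac_bounds (small _ hb).
have /andP[nc1 nc2] := fac_bounds (small _ hc).
have /andP[nd1 nd2] := fac_bounds (small _ hd).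
have hqc : nr qc <= K by rewrite nq.
have /andP[ne1 ne2] := fac_bounds (small qc hqc).
have /andP[nf1 nf2] := fac_bounds (small _ he).
have /andP[ng1 ng2] := fac_bounds (small _ hw).
rewrite WS nrM ler_wpM2l ?nr_ge0 //.
rewrite !nrM nrV !nrM nrN nr1 nrq mul1r.
set n1 := nr (1 - a * _) in na1 na2 *; set n2 := nr (1 - b * _) in nb1 nb2 *.
set n3 := nr (1 - c * _) in nc1 nc2 *.
set d0 := nr (1 - qc * _) in ne1 ne2 *; set d1 := nr (1 - d * _) in nd1 nd2 *.
set d2 := nr (1 - e * _) in nf1 nf2 *.
set d3 := nr (1 - w * _) in ng1 ng2 *.
have P8 : n1 * n2 * n3 <= 8.
  have -> : (8 : R) = 2 * 2 * 2 by rewrite -!natrM.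
  apply: ler_pM; [|lra|apply: ler_pM; lra|lra].
  by apply: mulr_ge0; lra.
have D16 : 16^-1 <= d0 * d1 * d2 * d3.
  have -> : (16 : R)^-1 = 2^-1 * 2^-1 * 2^-1 * 2^-1.
    by rewrite -!invfM -!natrM.
  apply: ler_pM; [| lra | | lra].
    by rewrite !mulr_ge0 //; lra.
  apply: ler_pM; [| lra | | lra].
    by rewrite !mulr_ge0 //; lra.
  apply: ler_pM; lra.
have Dpos : 0 < d0 * d1 * d2 * d3 by apply: lt_le_trans D16; rewrite invr_gt0.
have Di : (d0 * d1 * d2 * d3)^-1 <= 16.
  by rewrite -[X in _ <= X]invrK lef_pV2 ?posrE ?invr_gt0.
have X : q ^+ k * nr s <= 256^-1.
  by rewrite -epsK; apply: ler_pM; [exact: qk0 | exact: nr_ge0 | exact: qk | exact: hs].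
have -> : q ^+ k * (n1 * n2 * n3) * (d0 * d1 * d2 * d3)^-1 * nr s =
   (q ^+ k * nr s) * (n1 * n2 * n3) * (d0 * d1 * d2 * d3)^-1 by ring.
apply: le_trans (_ : 256^-1 * 8 * 16 <= _); last lra.
apply: ler_pM; first (by rewrite mulr_ge0 // ?mulr_ge0 ?nr_ge0 //; lra);
  first by rewrite invr_ge0 ltW.
  apply: ler_pM => //; first by rewrite mulr_ge0 ?nr_ge0.
  by rewrite !mulr_ge0 //; lra.
exact: Di.
Qed.

Lemma W_summable a b c d e w s :
  cvgn (series (fun k => nr (W a b c d e w s k))).
Proof.
have [m0 hm0] := W_ratio a b c d e w s.
exact: (ratio_summable (m0 := m0) (fun n => nr_ge0 _) hm0).
Qed.

Definition cc (m : nat) : Cx R := (-1) ^+ m * qc ^+ 'C(m, 2) / qpoch qc qc m.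
Definition cz (z : Cx R) (m : nat) : Cx R := cc m * z ^+ m.

Lemma cz_W z m : cz z m = W 0 0 0 0 0 0 z m.
Proof. by rewrite /cz /cc /W !qpoch0 !mulr1. Qed.

Lemma cz_nsum z : cvgn (series (fun m => nr (cz z m))).
Proof.
rewrite (_ : (fun m => _) = (fun m => nr (W 0 0 0 0 0 0 z m))); first exact: W_summable.
by apply: funext => m; rewrite cz_W.
Qed.

Lemma cz_sum z : cvgn (series (cz z)).
Proof. by apply: (@abs_cvg _ (cz z) (fun m => nr (cz z m))) => //; exact: cz_nsum. Qed.

Definition F z := limn (series (cz z)).

Lemma qpoch_neq0 z k : (forall j, z * qc ^+ j != 1) -> qpoch qc z k != 0.
Proof.
move=> h; rewrite /qpoch prodf_seq_neq0; apply/allP => i _ /=.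
by rewrite subr_eq0 eq_sym h.
Qed.

Lemma qq_neq0 k : qpoch qc qc k != 0.
Proof.
apply: qpoch_neq0 => j; apply/negP => /eqP h.
have := congr1 (@nr R) h; rewrite nr1 -exprS nrq => h1.
have : q ^+ j.+1 < 1 by rewrite exprn_ilt1 //; case/andP: hq => h2 h3 //; exact: ltW.
by rewrite h1 ltxx.
Qed.

Lemma cc_key N : cc N.+1 * (1 - qc * qc ^+ N) = - (qc ^+ N * cc N).
Proof.
have u0 : 1 - qc * qc ^+ N != 0.
  by have := qq_neq0 N.+1; rewrite qpochS mulf_eq0 negb_or => /andP[].
have := qq_neq0 N => q0.
rewrite /cc qpochS binS2 exprD exprS invfM.
field.
by rewrite q0 u0.
Qed.

Lemma czS z N : cz z N.+1 = cz (qc * z) N.+1 - z * cz (qc * z) N.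
Proof.
rewrite /cz !exprMn !exprS.
transitivity (cc N.+1 * (1 - qc * qc ^+ N) * (z * z ^+ N) +
              cc N.+1 * ((qc * qc ^+ N) * (z * z ^+ N))); first by ring.
rewrite cc_key; ring.
Qed.

Lemma E2 z N : series (cz z) N.+1 = series (cz (qc * z)) N.+1 - z * series (cz (qc * z)) N.
Proof.
elim: N => [|N IH].
  have s0 : forall f : nat -> Cx R, series f 0 = 0.
    by move=> f; rewrite seriesEnat /= big_geq.
  by rewrite !seriesSr !s0 /cz !expr0; ring.
rewrite seriesSr IH [series (cz (qc * z)) N.+2]seriesSr.
rewrite [series (cz (qc * z)) N.+1]seriesSr czS; ring.
Qed.

Lemma E3 z : F z = (1 - z) * F (qc * z).
Proof.
have h1 : (fun N => series (cz z) N.+1) @ \oo --> F z.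
  by rewrite (cvg_shiftS (series (cz z))); exact: cz_sum.
have h2 : (fun N => series (cz z) N.+1) @ \oo --> F (qc * z) - z * F (qc * z).
  rewrite (_ : (fun N => _) = (fun N => series (cz (qc * z)) N.+1 -
                                       z * series (cz (qc * z)) N)); last first.
    by apply: funext => N; rewrite E2.
  apply: cvgB.
    by rewrite (cvg_shiftS (series (cz (qc * z)))); exact: cz_sum.
  by apply: cvgMr; exact: cz_sum.
rewrite -(cvg_lim _ h1) // (cvg_lim _ h2) //; ring.
Qed.

Lemma E4 z N : qpoch qc z N * F (qc ^+ N * z) = F z.
Proof.
elim: N => [|N IH]; first by rewrite /qpoch big_ord0 mul1r expr0 mul1r.
rewrite qpochS -IH (E3 (qc ^+ N * z)) exprS [z * qc ^+ N]mulrC -mulrA; congr (_ * (_ * F _)); by rewrite mulrA.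
Qed.

Definition Kc := limn (series (fun m => nr (cc m))).

Lemma cc_nsum : cvgn (series (fun m => nr (cc m))).
Proof.
rewrite (_ : (fun m => _) = (fun m => nr (cz 1 m))); first exact: cz_nsum.
by apply: funext => m; rewrite /cz expr1n mulr1.
Qed.

Lemma cc0 : cc 0 = 1.
Proof. by rewrite /cc /qpoch big_ord0 /= expr0 invr1 !mulr1. Qed.

Lemma E5 w : nr w <= 1 -> nr (F w - 1) <= nr w * Kc.
Proof.
move=> hw.
have hg : cvgn (series (nr w *: (fun m => nr (cc m)))).
  by apply: is_cvg_seriesZ; exact: cc_nsum.
have hd : forall m, (1 <= m)%N -> nr (cz w m) <= (nr w *: (fun m => nr (cc m))) m.
  case=> // m _; rewrite /cz nrM nrX exprS /= mulrCA.
  rewrite ler_wpM2l ?nr_ge0 // ler_piMr ?nr_ge0 // exprn_ile1 ?nr_ge0 //.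
have := tail_bound (@cz_sum w) hg hd.
have -> : series (cz w) 1 = 1 by rewrite seriesEnat /= big_nat1 /cz cc0 expr0 mulr1.
rewrite /F => h; apply: le_trans h _.
rewrite (lim_seriesZ _ cc_nsum) -/Kc.
rewrite seriesEnat /= big_nat1 /= gerBl //.
by rewrite mulr_ge0 ?nr_ge0.
Qed.

Lemma E6 z : (fun N => F (qc ^+ N * z)) @ \oo --> (1 : Cx R).
Proof.
apply: bridge.
have hq1 : `|q| < 1 by case/andP: hq => h1 h2; rewrite ger0_norm // ltW.
have hqn : (fun N => q ^+ N * nr z) @ \oo --> (0:R).
  by rewrite -(mul0r (nr z)); apply: cvgMl; exact: cvg_expr.
have ev : \forall N \near \oo, q ^+ N * nr z < 1 by apply: (cvgr_lt _ hqn); rewrite ltr01.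
have H2 : (fun N => q ^+ N * nr z * Kc) @ \oo --> (0:R).
  by rewrite -(mul0r Kc); apply: cvgMl.
apply: (squeeze_cvgr _ (cvg_cst 0) H2).
near=> N; rewrite nr_ge0 /= -nrN opprB.
have h : nr (qc ^+ N * z) <= 1 by rewrite nrM nrq; apply: ltW; near: N.
by apply: le_trans (E5 h) _; rewrite nrM nrq.
Unshelve. all: by end_near.
Qed.

Lemma E7 z : (fun N => qpoch qc z N) @ \oo --> F z.
Proof.
have h6 := E6 z.
have hinv : (fun N => (F (qc ^+ N * z))^-1) @ \oo --> (1 : Cx R).
  by rewrite -[X in _ --> X]invr1; apply: cvgV => //; exact: oner_neq0.
have hm : (fun N => F z * (F (qc ^+ N * z))^-1) @ \oo --> F z.
  by rewrite -[X in _ --> X]mulr1; apply: cvgMr.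
apply: cvg_trans hm; apply: near_eq_cvg.
have ev : \forall N \near \oo, nr (1 - F (qc ^+ N * z)) < 1.
  by apply: (cvgr_lt _ (bridgeC h6)); rewrite ltr01.
near=> N.
have hF : F (qc ^+ N * z) != 0.
  apply/negP => /eqP h0; have : nr (1 - F (qc ^+ N * z)) < 1 by near: N.
  by rewrite h0 subr0 nr1 ltxx.
by rewrite /= -(E4 z N) mulfK.
Unshelve. all: by end_near.
Qed.

Lemma binD2 k m : 'C(k + m, 2) = ('C(k, 2) + 'C(m, 2) + k * m)%N.
Proof.
elim: m => [|m IH]; first by rewrite addn0 muln0 addn0 /= addn0.
rewrite addnS !binS2 IH mulnS; lia.
Qed.

Lemma tri_exchange (V : zmodType) (h : nat -> nat -> V) M :
  \sum_(0 <= n < M) \sum_(0 <= k < n.+1) h k (n - k)%N =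
  \sum_(0 <= k < M) \sum_(0 <= m < M - k) h k m.
Proof.
elim: M => [|M IH]; first by rewrite !big_geq.
rewrite big_nat_recr //= IH [in RHS]big_nat_recr //= subSnn big_nat1.
rewrite (@eq_big_nat _ _ _ 0 M (fun k => \sum_(0 <= m < M.+1 - k) h k m) (fun k => \sum_(0 <= m < M - k) h k m + h k (M - k)%N)); last first.
  by move=> k /andP[_ hk]; rewrite (subSn (ltnW hk)) big_nat_recr.
rewrite big_split /= [X in _ + X = _](big_nat_recr _ _ _ (leq0n M)) /= subnn.
by rewrite addrA.
Qed.

Lemma hyp_conv z : (forall m : nat, z != qc ^- m) -> forall j, z * qc ^+ j != 1.
Proof.
move=> h j; apply: contra (h j) => /eqP e.
have qc0 : qc ^+ j != 0.
  rewrite expf_neq0 // -nr_eq0 nrR normr_eq0 gt_eqF //; by case/andP: hq.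
by rewrite -[z](mulfK qc0) e mul1r.
Qed.

Lemma M1 a b c d e x y t n :
  (forall m : nat, d != qc ^- m) -> (forall m : nat, e != qc ^- m) ->
  phi qc a b c d e x y n * ((-1) ^+ n * qc ^+ 'C(n, 2) * t ^+ n) / qpoch qc qc n =
  \sum_(0 <= k < n.+1) W a b c d e 0 (y * t) k * cz (qc ^+ k * (x * t)) (n - k)%N.
Proof.
move=> hd he.
rewrite /phi -mulrA mulr_suml big_mkord; apply: eq_bigr => [[k hk]] _ /=.
have [m hm] : exists m, n = (k + m)%N by exists (n - k)%N; rewrite subnKC.
rewrite hm /qbinom !addKn /W /cz /cc !qpoch0 binD2 !exprD !exprMn exprM.
have := qq_neq0 (k + m); have := qq_neq0 k; have := qq_neq0 m.
have := qpoch_neq0 k (hyp_conv hd); have := qpoch_neq0 k (hyp_conv he).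
move=> h1 h2 h3 h4 h5.
field. by rewrite h1 h2 h3 h4 h5.

Qed.

Lemma M3 a b c d e x y t k :
  (forall m : nat, d != qc ^- m) -> (forall m : nat, e != qc ^- m) ->
  (forall m : nat, x * t != qc ^- m) ->
  W a b c d e 0 (y * t) k * F (qc ^+ k * (x * t)) = F (x * t) * W a b c d e (x * t) (y * t) k.
Proof.
move=> hd he hxt.
rewrite -(E4 (x * t) k) /W qpoch0.
have := qq_neq0 k; have := qpoch_neq0 k (hyp_conv hd); have := qpoch_neq0 k (hyp_conv he).
have := qpoch_neq0 k (hyp_conv hxt).
move=> h1 h2 h3 h4.
field.
by rewrite h1 h2 h3 h4.
Qed.

End Q.
Set Implicit Arguments. Unset Strict Implicit.

Section Q2.
Variable R : realType.
Variable q : R.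
Hypothesis hq : 0 < q < 1.
Let qc : Cx R := q%:C.
Local Notation W := (W q).
Local Notation F := (F q).
Local Notation cz := (cz q).
Lemma main_sec a b c d e x y t :
  (forall m : nat, d != qc ^- m) ->
  (forall m : nat, e != qc ^- m) ->
  (forall m : nat, x * t != qc ^- m) ->
  let u := fun n : nat =>
    phi qc a b c d e x y n * ((-1) ^+ n * qc ^+ 'C(n, 2) * t ^+ n)
      / qpoch qc qc n in
  let v := fun N : nat =>
    (-1) ^+ N * qc ^+ 'C(N, 2)
      * (qpoch qc a N * qpoch qc b N * qpoch qc c N)
      / (qpoch qc qc N * qpoch qc d N * qpoch qc e N * qpoch qc (x * t) N)
      * (y * t) ^+ N in
  let P := fun n : nat => qpoch qc (x * t) n in
  [/\ cvgn (series u), cvgn P, cvgn (series v) &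
      limn (series u) = limn P * limn (series v)].
Proof.
move=> hd he hxt u v P.
have hv : v = W a b c d e (x * t) (y * t) by [].
have hvs : cvgn (series v).
  rewrite hv; apply: (@abs_cvg _ _ (fun k => nr (W a b c d e (x * t) (y * t) k))) => //.
  exact: (W_summable hq).
have hP : P @ \oo --> F (x * t) := @E7 R q hq (x * t).
set Vs := limn (series v).
pose al := fun k => W a b c d e 0 (y * t) k.
pose g := fun m => nr (cz (x * t) m).
have hg : cvgn (series g) := @cz_nsum R q hq (x * t).
pose B := limn (series g).
pose T := fun L => B - series g L.
have gS : forall L, 0 <= series g L <= B.
  move=> L; apply/andP; split.
    by rewrite seriesEnat /=; apply: sumr_ge0 => i _; exact: nr_ge0.
  apply: nondecreasing_cvgn_le => //.
  exact: (@nondecreasing_series R g xpredT 0 (fun n _ _ => nr_ge0 _)).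
have hT : forall L, 0 <= T L <= B.
  by move=> L; case/andP: (gS L) => h1 h2; rewrite /T subr_ge0 h2 /= gerBl.
have hT0 : T @ \oo --> (0:R).
  by rewrite /T -(subrr B); apply: cvgB => //; exact: cvg_cst.
have q0 : 0 <= q by case/andP: hq => h _; exact: ltW.
have q1 : q <= 1 by case/andP: hq => _ h; exact: ltW.
have dom : forall k m, nr (cz (qc ^+ k * (x * t)) m) <= g m.
  move=> k m; rewrite /g /cz nrM [nr (_ * (x * t) ^+ m)]nrM ler_wpM2l ?nr_ge0 //.
  by rewrite exprMn nrM ler_piMl ?nr_ge0 // nrX (nrq hq) exprn_ile1 ?exprn_ge0 // exprn_ile1.


have err : forall M, nr (F (x * t) * Vs - series u M) <=
    nr (F (x * t)) * nr (Vs - series v M) + \sum_(0 <= k < M) nr (al k) * T (M - k)%N.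
  move=> M.
  have su : series u M = \sum_(0 <= k < M) al k * series (cz (qc ^+ k * (x * t))) (M - k)%N.
    rewrite seriesEnat /= (eq_bigr _ (fun n _ => M1 hq a b c x y t n hd he)).
    rewrite (tri_exchange (fun k m => al k * cz (qc ^+ k * (x * t)) m)).
    by apply: eq_bigr => k _; rewrite seriesEnat /= mulr_sumr.
  have sv : F (x * t) * series v M = \sum_(0 <= k < M) al k * F (qc ^+ k * (x * t)).
    rewrite seriesEnat /= mulr_sumr; apply: eq_bigr => k _.
    by rewrite /al (@M3 R q hq a b c d e x y t k hd he hxt).
  have -> : F (x * t) * Vs - series u M = F (x * t) * (Vs - series v M) +
              (F (x * t) * series v M - series u M) by ring.
  apply: le_trans (nrD _ _) _; rewrite nrM lerD2l.
  rewrite sv su -sumrB.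
  apply: le_trans (nr_sum _ _ _) _; apply: ler_sum_nat => k _ /=.
  rewrite -mulrBr nrM ler_wpM2l ?nr_ge0 //.
  exact: (tail_bound (@cz_sum R q hq (qc ^+ k * (x * t))) hg (fun m _ => dom k m)).
have hu : series u @ \oo --> F (x * t) * Vs.
  apply: bridge.
  have H1 : (fun M => nr (F (x * t)) * nr (Vs - series v M)) @ \oo --> (0:R).
    have hv0 := bridgeC hvs.
    have hv1 : (fun n => nr (F (x * t)) * nr (Vs - series v n)) @ \oo --> nr (F (x * t)) * 0 := cvgMr hv0.
    rewrite mulr0 in hv1.
    exact: hv1.
  have H2 := @conv_null R (fun k => nr (al k)) T B (fun k => nr_ge0 _)
      (@W_summable R q hq a b c d e 0 (y * t)) hT hT0.
  have H : (fun M => nr (F (x * t)) * nr (Vs - series v M) +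
     \sum_(0 <= k < M) nr (al k) * T (M - k)%N) @ \oo --> (0:R).
    have h := cvgD H1 H2; rewrite addr0 in h; exact: h.
  apply: (squeeze_cvgr _ (cvg_cst 0) H).
  by near=> M; rewrite nr_ge0 /=; exact: err.
split.
- exact: (cvgP _ hu).
- exact: (cvgP _ hP).
- exact: hvs.
- by rewrite (cvg_lim _ hu) // (cvg_lim _ hP).
Unshelve. all: by end_near.
Qed.

End Q2.

Local Close Scope classical_set_scope.

Theorem corollary1 (R : realType) (q : R) (a b c d e x y t : Cx R) :
  0 < q < 1 ->
  `|y * t| < 1 ->
  (forall m : nat, d != (q%:C : Cx R) ^- m) ->
  (forall m : nat, e != (q%:C : Cx R) ^- m) ->
  (forall m : nat, x * t != (q%:C : Cx R) ^- m) ->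
  let qc : Cx R := q%:C in
  let u := fun n : nat =>
    phi qc a b c d e x y n * ((-1) ^+ n * qc ^+ 'C(n, 2) * t ^+ n)
      / qpoch qc qc n in
  let v := fun N : nat =>
    (-1) ^+ N * qc ^+ 'C(N, 2)
      * (qpoch qc a N * qpoch qc b N * qpoch qc c N)
      / (qpoch qc qc N * qpoch qc d N * qpoch qc e N * qpoch qc (x * t) N)
      * (y * t) ^+ N in
  let P := fun n : nat => qpoch qc (x * t) n in
  [/\ cvgn (series u), cvgn P, cvgn (series v) &
      limn (series u) = limn P * limn (series v)].
Proof.
move=> hq _ hd he hxt.
exact: (@main_sec R q hq a b c d e x y t hd he hxt).
Qed.
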